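(* Let $d\geq 1$ and let $\mathcal Z=G(d,2d)$ be the Grassmannian of $d$-dimensional subspaces of $\mathbb C^{2d}$. Let $U,V,W\in\mathcal Z$ be three points that are pairwise in general position, i.e. $U\cap V=U\cap W=V\cap W=0$ as subspaces of $\mathbb C^{2d}$. Then there is a unique morphism $f\colon\mathbb P^1\to\mathcal Z$ of degree $d$ such that $f(0)=U$, $f(1)=V$ and $f(\infty)=W$.
   Context: The degree of a morphism $f\colon\mathbb P^1\to G(k,n)$ is $\int f_*[\mathbb P^1]\cdot\sigma_1$, where $\sigma_1$ is the class of the Schubert divisor; equivalently it is the degree of the pullback of the tautological quotient bundle (minus the degree of the pullback of the tautological subbundle). Points of $\mathbb P^1$ are written in homogeneous coordinates $(s:t)$, with $0=(1:0)$, $1=(1:1)$, $\infty=(0:1)$. *)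

(* Defs.v *)
From mathcomp Require Import all_boot all_order all_algebra.
Set Implicit Arguments. Unset Strict Implicit. Unset Printing Implicit Defensive.
Import Order.TTheory GRing.Theory Num.Theory.
Local Open Scope ring_scope.

(* Conventions:
   - A point of the Grassmannian G(k,n) is represented by a k x n matrix of
     rank k; the point is its row space.  Two representatives give the same
     point iff (A == B)%MS.
   - A point (s:t) of P^1 is a pair (s,t) <> (0,0); 0=(1:0), 1=(1:1), oo=(0:1).
   - A homogeneous binary form of degree e is encoded by q : {poly C} with
     size q <= e+1, via  hom_eval e q s t = \sum_i q_i s^i t^(e-i).
   - A morphism P^1 -> G(k,n) of degree e is a map f on pairs (s,t) whose
     composite with the Pluecker embedding is given by binary forms of degree e
     without common zero on P^1 (Pluecker coordinates of the row space of A
     are the maximal minors det (colsub g A), g : 'I_k -> 'I_n). Degree e is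
     the degree of the pullback of O(1) = class of sigma_1. *)

Definition hom_eval (C : comRingType) (e : nat) (q : {poly C}) (s t : C) : C :=
  \sum_(i < e.+1) q`_i * s ^+ i * t ^+ (e - i).

Definition pluecker (C : comRingType) (k n : nat) (A : 'M[C]_(k, n))
  (g : {ffun 'I_k -> 'I_n}) : C := \det (colsub g A).

Definition is_P1_morphism_of_degree (C : fieldType) (k n : nat)
  (f : C -> C -> 'M[C]_(k, n)) (e : nat) : Prop :=
  exists p : {ffun 'I_k -> 'I_n} -> {poly C},
    (forall g, (size (p g) <= e.+1)%N) /\
    (forall s t : C, (s, t) != (0, 0) -> exists g, hom_eval e (p g) s t != 0) /\
    (forall s t : C, (s, t) != (0, 0) ->
       exists c : C, c != 0 /\
         forall g, pluecker (f s t) g = c * hom_eval e (p g) s t).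

(* Main.v *)
Require Import Defs.
From mathcomp Require Import all_boot all_order all_algebra.
From mathcomp Require Import ring zify all_fingroup.
Set Implicit Arguments. Unset Strict Implicit. Unset Printing Implicit Defensive.
Import Order.TTheory GRing.Theory Num.Theory.
Local Open Scope ring_scope.

Lemma hom_eval_t0 (C : comRingType) e (q : {poly C}) s :
  hom_eval e q s 0 = q`_e * s ^+ e.
Proof.
rewrite /hom_eval big_ord_recr /= subnn expr0 mulr1 big1 ?add0r // => i _.
by rewrite expr0n subn_eq0 leqNgt ltn_ord /= mulr0.
Qed.

Lemma hom_eval_tn0 (C : fieldType) e (q : {poly C}) s t :
  (size q <= e.+1)%N -> t != 0 -> hom_eval e q s t = t ^+ e * q.[s / t].
Proof.
move=> hq ht; rewrite (horner_coef_wide _ hq) big_distrr /=.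
apply: eq_bigr => i _.
have hi : (i <= e)%N by rewrite -ltnS ltn_ord.
have -> : t ^+ e = t ^+ i * t ^+ (e - i) by rewrite -exprD subnKC.
rewrite exprMn exprVn.
have hti : t ^+ i != 0 by rewrite expf_neq0.
by field.
Qed.

Lemma hom_eval_x1 (C : fieldType) e (q : {poly C}) x :
  (size q <= e.+1)%N -> hom_eval e q x 1 = q.[x].
Proof. by move=> hq; rewrite hom_eval_tn0 ?oner_neq0 // expr1n mul1r divr1. Qed.

Lemma hom_eval_10 (C : comRingType) e (q : {poly C}) :
  hom_eval e q 1 0 = q`_e.
Proof. by rewrite hom_eval_t0 expr1n mulr1. Qed.

Lemma hom_eval_01 (C : comRingType) e (q : {poly C}) :
  hom_eval e q 0 1 = q`_0.
Proof.
rewrite /hom_eval big_ord_recl /= expr0 mulr1 expr1n mulr1 big1 ?addr0 // => i _.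
by rewrite expr0n /= mulr0 mul0r.
Qed.

Lemma hom_evalD (C : comRingType) e (p q : {poly C}) s t :
  hom_eval e (p + q) s t = hom_eval e p s t + hom_eval e q s t.
Proof.
by rewrite /hom_eval -big_split; apply: eq_bigr => i _; rewrite coefD !mulrDl.
Qed.

Lemma hom_evalZ (C : comRingType) e (c : C) (p : {poly C}) s t :
  hom_eval e (c *: p) s t = c * hom_eval e p s t.
Proof.
by rewrite /hom_eval big_distrr; apply: eq_bigr => i _; rewrite coefZ -!mulrA.
Qed.

Lemma hom_eval0 (C : comRingType) e s t : hom_eval e (0 : {poly C}) s t = 0.
Proof. by rewrite /hom_eval big1 // => i _; rewrite coef0 !mul0r. Qed.

Lemma hom_eval_sum (C : comRingType) e (I : finType) (F : I -> {poly C}) s t :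
  hom_eval e (\sum_i F i) s t = \sum_i hom_eval e (F i) s t.
Proof.
elim/big_rec2: _ => [|i x p _ <-]; first by rewrite hom_eval0.
by rewrite hom_evalD.
Qed.

Lemma hom_evalXn (C : comRingType) e k (c : C) s t : (k <= e)%N ->
  hom_eval e (c *: 'X^k) s t = c * s ^+ k * t ^+ (e - k).
Proof.
move=> hk; rewrite /hom_eval (bigD1 (Ordinal (leq_ltn_trans hk (ltnSn e)))) //=.
rewrite coefZ coefXn eqxx mulr1 big1 ?addr0 // => i hi.
rewrite coefZ coefXn; case: eqP => [h|]; last by rewrite mulr0 !mul0r.
by move: hi; rewrite -(inj_eq val_inj) /= h eqxx.
Qed.

Definition isform (C : comRingType) e (phi : C -> C -> C) :=
  exists q : {poly C}, (size q <= e.+1)%N /\ forall s t, phi s t = hom_eval e q s t.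

Lemma coefM_top (C : comRingType) e1 e2 (p q : {poly C}) :
  (size p <= e1.+1)%N -> (size q <= e2.+1)%N ->
  (p * q)`_(e1 + e2) = p`_e1 * q`_e2.
Proof.
move=> hp hq; rewrite coefM (bigD1 (Ordinal (leq_ltn_trans (leq_addr e2 e1) (ltnSn _)))) //=.
rewrite addKn big1 ?addr0 // => i /eqP hi.
have [lt|gt|eq] := ltngtP i e1.
- rewrite [q`__]nth_default ?mulr0 //; apply: leq_trans hq _. 
  by rewrite ltn_subRL ltn_add2r.
- by rewrite [p`__]nth_default ?mul0r //; apply: leq_trans hp _.
- by case: hi; apply: val_inj.
Qed.

Lemma isformM (C : fieldType) e1 e2 phi psi :
  isform e1 phi -> isform e2 psi -> isform (e1 + e2) (fun s t : C => phi s t * psi s t).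
Proof.
move=> [p [hp ep]] [q [hq eq2]]; exists (p * q); split.
  by have := size_mul_leq p q; lia.
move=> s t; rewrite ep eq2; have [->|ht] := eqVneq t 0.
  rewrite !hom_eval_t0 exprD coefM_top //; ring.
have hpq : (size (p * q)%R <= (e1 + e2).+1)%N.
  by have := size_mul_leq p q; lia.
rewrite !hom_eval_tn0 // hornerM exprD; ring.
Qed.

Lemma isform_ext (C : comRingType) e (phi psi : C -> C -> C) :
  (forall s t, phi s t = psi s t) -> isform e phi -> isform e psi.
Proof. by move=> h [q [hq e']]; exists q; split=> // s t; rewrite -h. Qed.

Lemma isformZ (C : comRingType) e (c : C) phi :
  isform e phi -> isform e (fun s t => c * phi s t).
Proof.
move=> [q [hq e']]; exists (c *: q); split; first exact: leq_trans (size_scale_leq _ _) hq.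
by move=> s t; rewrite hom_evalZ e'.
Qed.

Lemma isform_sum (C : comRingType) e (I : finType) (F : I -> C -> C -> C) :
  (forall i, isform e (F i)) -> isform e (fun s t => \sum_i F i s t).
Proof.
move=> hF; have /fin_all_exists [q hq] : forall i, exists q : {poly C},
   (size q <= e.+1)%N /\ forall s t, F i s t = hom_eval e q s t by [].
exists (\sum_i q i); split.
  apply: leq_trans (size_sum _ _ _) _; elim/big_rec: _ => //= i m _ hm.
  by rewrite geq_max hm (proj1 (hq i)).
by move=> s t; rewrite hom_eval_sum; apply: eq_bigr => i _; rewrite (proj2 (hq i)).
Qed.

Lemma isform_prod (C : fieldType) n (F : 'I_n -> C -> C -> C) :
  (forall i, isform 1 (F i)) -> isform n (fun s t => \prod_i F i s t).
Proof.
elim: n F => [|n IH] F hF.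
  exists 1; split; first by rewrite size_poly1.
  by move=> s t; rewrite big_ord0 /hom_eval big_ord1 coef1 /= !mul1r.
apply: (isform_ext (phi := fun s t => (\prod_(i < n) F (widen_ord (leqnSn n) i) s t) * F ord_max s t)).
  by move=> s t; rewrite big_ord_recr.
have h := isformM (IH (fun i => F (widen_ord (leqnSn n) i)) (fun i => hF _)) (hF ord_max).
by rewrite addn1 in h.
Qed.

Lemma isform_det (C : fieldType) n (P Q : 'M[C]_n) :
  isform n (fun s t => \det (s *: P + t *: Q)).
Proof.
apply: (isform_ext (phi := fun s t => \sum_(sg : 'S_n) (-1) ^+ sg * \prod_i (s *: P + t *: Q) i (sg i))).
  by move=> s t; rewrite /determinant.
apply: isform_sum => sg; apply: isformZ; apply: isform_prod => i.
exists ((P i (sg i))%:P * 'X + (Q i (sg i))%:P); split.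
  apply: leq_trans (size_polyD _ _) _; rewrite geq_max size_polyC.
  apply/andP; split; last by case: (_ != _).
  by apply: leq_trans (size_mul_leq _ _) _; rewrite size_polyX size_polyC; case: (_ != _).
move=> s t; rewrite !mxE /hom_eval big_ord_recr big_ord1 /= !coefD !coefMX !coefC /=.
rewrite ?expr0 ?expr1 ?subnn ?expr0 /=; ring.
Qed.

Lemma det_mul_CB (C : comRingType) d N (F : 'M[C]_(d, N)) (K : 'M[C]_(N, d)) :
  \det (F *m K) =
  \sum_(h : {ffun 'I_d -> 'I_N}) (\prod_i K (h i) i) * \det (colsub h F).
Proof.
rewrite /determinant.
have e1 : forall sg : 'S_d, \prod_i (F *m K) i (sg i) =
   \sum_(f : {ffun 'I_d -> 'I_N}) \prod_i (F i (f i) * K (f i) (sg i)).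
  move=> sg; rewrite -(bigA_distr_bigA (fun i k => F i k * K k (sg i))).
  by apply: eq_bigr => i _; rewrite mxE.
under eq_bigr => sg _ do rewrite e1 big_distrr.
under [RHS]eq_bigr => h _ do rewrite big_distrr.
rewrite [RHS]exchange_big /=; apply: eq_bigr => sg _.
pose hh (f : {ffun 'I_d -> 'I_N}) := [ffun j => f (sg^-1%g j)].
have hinj : injective hh.
  move=> f g /ffunP e; apply/ffunP => i; have := e (sg i).
  by rewrite !ffunE permK.
rewrite [RHS](reindex_inj hinj); apply: eq_bigr => f _.
rewrite /hh mulrCA; congr (_ * _).
rewrite big_split /= mulrC; congr (_ * _).
  rewrite [RHS](reindex_inj (@perm_inj _ sg)); apply: eq_bigr => i _.
  by rewrite ffunE permK.
by apply: eq_bigr => i _; rewrite mxE ffunE permK.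
Qed.

Definition repcol (C : pzRingType) m n (M : 'M[C]_(m, n)) (v : 'cV[C]_m) (i : 'I_n) :
  'M[C]_(m, n) := \matrix_(k, l) if l == i then v k 0 else M k l.

Lemma mul_repcol (C : pzRingType) m p n (F : 'M[C]_(m, p)) (K : 'M[C]_(p, n)) v i :
  F *m repcol K v i = repcol (F *m K) (F *m v) i.
Proof.
apply/matrixP => a l; rewrite /repcol !mxE.
under eq_bigr => k _ do rewrite mxE.
by case: eqP.
Qed.

Lemma cramer_entry (C : comPzRingType) n (M N : 'M[C]_n) i j :
  (\adj M *m N) i j = \det (repcol M (col j N) i).
Proof.
rewrite (expand_det_col _ i) mxE; apply: eq_bigr => k _.
rewrite /adjugate /repcol !mxE eqxx mulrC; congr (_ * _).
rewrite /cofactor; congr (_ * \det _); apply/matrixP => a b; rewrite !mxE.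
by rewrite eq_sym (negbTE (neq_lift _ _)).
Qed.

Lemma det_adj (C : fieldType) n (M : 'M[C]_n) : \det (\adj M) = \det M ^+ n.-1.
Proof.
case: n M => [|[|m]] M.
- by rewrite !det_mx00.
- rewrite expr0 [\adj M](_ : _ = 1%:M) ?det1 //; apply/matrixP => i j.
  by rewrite !mxE !ord1 /cofactor det_mx00 expr0 mulr1.
have h : \det M * \det (\adj M) = \det M ^+ m.+2.
  by rewrite -det_mulmx mul_mx_adj det_scalar.
have [z|nz] := eqVneq (\det M) 0; last first.
  by apply: (mulfI nz); rewrite h -exprS.
rewrite z expr0n /=; apply/eqP; apply/negPn/negP => hadj.
have hu : \adj M \in unitmx by rewrite unitmxE unitfE.
have M0 : M = 0.
  have : M *m \adj M = 0 by by rewrite mul_mx_adj z raddf0.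
  by move=> /(congr1 (mulmx^~ (invmx (\adj M)))); rewrite mulmxK // mul0mx.
move: hadj; rewrite M0 -(scale0r (1%:M : 'M[C]_m.+2)) adjZ /= expr0n /= scale0r det0 eqxx.
done.
Qed.

Lemma poly_eval_inj (C : numFieldType) (p q : {poly C}) :
  (forall x, p.[x] = q.[x]) -> p = q.
Proof.
move=> h; apply/eqP; rewrite -subr_eq0; apply/negPn/negP => nz.
pose rs := [seq (i%:R : C) | i <- iota 0 (size (p - q))].
have h1 : all (root (p - q)) rs.
  by apply/allP => x /mapP [i _ ->]; rewrite /root hornerD hornerN h subrr.
have h2 : uniq rs.
  rewrite map_inj_uniq ?iota_uniq // => i j /eqP.
  by rewrite eqr_nat => /eqP.
by have := max_poly_roots nz h1 h2; rewrite size_map size_iota ltnn.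
Qed.

Lemma size_prod_le (C : comNzRingType) n (F : 'I_n -> {poly C}) k :
  (forall i, (size (F i) <= k.+1)%N) -> (size (\prod_i F i)%R <= (n * k).+1)%N.
Proof.
elim: n F => [|n IH] F hF; first by rewrite big_ord0 size_poly1.
rewrite big_ord_recr /=.
have h1 := IH (fun i => F (widen_ord (leqnSn n) i)) (fun i => hF _).
have h2 := hF ord_max.
have := size_mul_leq (\prod_(i < n) F (widen_ord (leqnSn n) i)) (F ord_max).
move: h1 h2; move: (\prod_(i < n) F (widen_ord (leqnSn n) i)) (F ord_max) => P Q.
rewrite mulSn -subn1.
move: (n * k)%N (size (P * Q)%R) (size P) (size Q) => nk z a b; lia.
Qed.

Lemma size_det_le (C : comNzRingType) n (M : 'M[{poly C}]_n) k :
  (forall i j, (size (M i j) <= k.+1)%N) -> (size (\det M) <= (n * k).+1)%N.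
Proof.
move=> hM; rewrite /determinant; apply: leq_trans (size_sum _ _ _) _.
elim/big_rec: _ => // sg m _ hm; rewrite geq_max hm andbT.
apply: leq_trans (size_mul_leq _ _) _.
have hs : (size ((-1) ^+ sg : {poly C}) <= 1)%N.
  by case: (odd_perm sg); rewrite ?expr1 ?expr0 ?size_opp size_poly1.
have := @size_prod_le _ n (fun i => M i (sg i)) k (fun i => hM i (sg i)).
move: hs; move: (size _) (size _) => a b; lia.
Qed.

Lemma size_top (C : nzRingType) e (q : {poly C}) :
  (size q <= e.+1)%N -> q`_e = 0 -> (size q <= e)%N.
Proof.
move=> h1 h2; apply/leq_sizeP => j; rewrite leq_eqVlt => /orP [/eqP <- // | hj].
by apply: nth_default; apply: leq_trans h1 hj.
Qed.

Lemma size_top_eq (C : nzRingType) e (q : {poly C}) :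
  (size q <= e.+1)%N -> q`_e != 0 -> size q = e.+1.
Proof.
move=> h1 h2; apply/eqP; rewrite eqn_leq h1 /= ltnNge; apply/negP => h3.
by move: h2; rewrite nth_default ?eqxx.
Qed.

Lemma Xk_form (C : idomainType) k (q r : {poly C}) :
  (size q <= k.+1)%N -> q = r * 'X^k -> q = r`_0 *: 'X^k.
Proof.
move=> hs e; have [r0|nz] := eqVneq r 0; first by rewrite e r0 mul0r coef0 scale0r.
move: hs; rewrite e size_mulXn // => hs.
rewrite -mul_polyC -size1_polyC //; lia.
Qed.

Lemma hom_eval_s0 (C : comRingType) e (q : {poly C}) t :
  hom_eval e q 0 t = q`_0 * t ^+ e.
Proof.
rewrite /hom_eval big_ord_recl /= expr0 mulr1 subn0 big1 ?addr0 // => i _.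
by rewrite expr0n /= mulr0 mul0r.
Qed.

Lemma hom_evalC (C : comRingType) e (c : C) s t :
  hom_eval e c%:P s t = c * t ^+ e.
Proof.
have -> : c%:P = c *: 'X^0 by rewrite expr0 alg_polyC.
by rewrite hom_evalXn // expr0 mulr1 subn0.
Qed.

Lemma poly_chain (C : numFieldType) d (aP bP : {poly C}) (nP mP : 'M[{poly C}]_d)
  (hd : (0 < d)%N) (sa : (size aP <= d.+1)%N) (ad : aP`_d != 0) (b0 : bP`_0 != 0)
  (sn : forall i j, (size (nP i j) <= d)%N) (m0 : forall i j, (mP i j)`_0 = 0)
  (V1 : forall i j, (nP i j).[1] = aP.[1] * (i == j)%:R)
  (I1 : \det nP = aP ^+ d.-1 * bP) (I2 : \det mP = bP ^+ d.-1 * aP)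
  (I3 : nP *m mP = (aP * bP)%:M) :
  exists al be : C, [/\ al != 0, be != 0, aP = al *: 'X^d, bP = be%:P &
     forall i j, nP i j = (al * (i == j)%:R) *: 'X^(d.-1)].
Proof.
have saP : size aP = d.+1 by apply: size_top_eq.
have anz : aP != 0 by rewrite -size_poly_eq0 saP.
have bnz : bP != 0 by apply: contraNneq b0 => ->; rewrite coef0.
have hdet : (size (\det nP) <= (d * d.-1).+1)%N.
  by apply: size_det_le => i j; rewrite prednK.
have sb : (size bP <= 1)%N.
  move: hdet; rewrite I1 size_mul ?expf_neq0 //.
  have := size_exp aP d.-1; rewrite saP /=.
  have : size (aP ^+ d.-1) != 0%N by rewrite size_poly_eq0 expf_neq0.
  move: (size (aP ^+ d.-1)) (size bP) (d * d.-1)%N => x y z; lia.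
set be := bP`_0.
have ebP : bP = be%:P by apply: size1_polyC.
have Xdiv : forall i j, mP i j %/ 'X * 'X = mP i j.
  move=> i j; apply: divpK; have := root_factor_theorem (mP i j) 0.
  by rewrite polyC0 subr0 => <-; rewrite /root horner_coef0 m0.
pose m1 := map_mx (fun q => q %/ 'X) mP.
have emP : mP = 'X *: m1.
  by apply/matrixP => i j; rewrite !mxE mulrC Xdiv.
have bd : be ^+ d.-1 != 0 by rewrite expf_neq0.
have I2' : 'X^d * \det m1 = (be ^+ d.-1)%:P * aP.
  by rewrite polyC_exp -ebP -I2 emP detZ.
have eaP : aP = (\det m1 * ((be ^+ d.-1)^-1)%:P) * 'X^d.
  apply: (@mulfI _ ((be ^+ d.-1)%:P)); first by rewrite polyC_eq0.
  have hu : (be ^+ d.-1)%:P * ((be ^+ d.-1)^-1)%:P = 1 by rewrite -polyCM mulfV.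
  rewrite -I2'; transitivity ('X^d * \det m1 * ((be ^+ d.-1)%:P * ((be ^+ d.-1)^-1)%:P)).
    by rewrite hu mulr1.
  ring.
have := Xk_form sa eaP; set al := _`_0 => eaP2.
have alnz : al != 0 by apply: contraNneq anz => h; rewrite eaP2 h scale0r.
have edm1 : \det m1 = (be ^+ d.-1 * al)%:P.
  apply: (@mulfI _ ('X^d)); first by rewrite monic_neq0 ?monicXn.
  by rewrite I2' eaP2 polyCM -mul_polyC; ring.
set de := be ^+ d.-1 * al.
have denz : de != 0 by rewrite mulf_neq0.
have I3' : nP *m m1 = ((al * be) *: 'X^(d.-1))%:M.
  apply/matrixP => i j; apply: (@mulfI _ ('X)); first by rewrite polyX_eq0.
  have := congr1 (fun M : 'M[{poly C}]_d => M i j) I3; rewrite emP -scalemxAr !mxE => ->.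
  have eXd : 'X^d = 'X * 'X^(d.-1) :> {poly C} by rewrite -exprS prednK.
  rewrite eaP2 ebP eXd -!mul_polyC -!mulrnAr polyCM; ring.
have I4 : forall i j, de%:P * nP i j = ((al * be) *: 'X^(d.-1)) * \adj m1 i j.
  move=> i j; have := congr1 (fun M : 'M[{poly C}]_d => M *m \adj m1) I3'.
  rewrite -mulmxA mul_mx_adj edm1 mul_mx_scalar mul_scalar_mx.
  by move=> /(congr1 (fun M : 'M[{poly C}]_d => M i j)); rewrite !mxE.
exists al, be; split => // i j.
have hn : nP i j = ((de^-1 * (al * be)) *: \adj m1 i j) * 'X^(d.-1).
  apply: (@mulfI _ (de%:P)); first by rewrite polyC_eq0.
  have hu : de%:P * (de^-1)%:P = 1 by rewrite -polyCM mulfV.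
  rewrite -!mul_polyC; transitivity ((de%:P * (de^-1)%:P) * (de%:P * nP i j)).
    by rewrite hu mul1r.
  rewrite I4 -mul_polyC; ring.
have snij : (size (nP i j) <= d.-1.+1)%N by rewrite prednK // sn.
have e := Xk_form snij hn.
rewrite e; congr (_ *: _); have := V1 i j.
by rewrite e eaP2 !hornerZ !hornerXn !expr1n !mulr1.
Qed.

Definition lin (C : comNzRingType) d N (p : {ffun 'I_d -> 'I_N} -> {poly C})
  (K : 'M[C]_(N, d)) : {poly C} :=
  \sum_(h : {ffun 'I_d -> 'I_N}) (\prod_i K (h i) i) *: p h.

Lemma lin_eval (C : comNzRingType) d N (p : {ffun 'I_d -> 'I_N} -> {poly C})
  (F : 'M[C]_(d, N)) K c s t :
  (forall g, pluecker F g = c * hom_eval d (p g) s t) ->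
  \det (F *m K) = c * hom_eval d (lin p K) s t.
Proof.
move=> h; rewrite det_mul_CB /lin hom_eval_sum big_distrr; apply: eq_bigr => g _.
rewrite hom_evalZ -/(pluecker F g) h; exact: mulrCA.
Qed.

Lemma lin_size (C : comNzRingType) d N (p : {ffun 'I_d -> 'I_N} -> {poly C}) K :
  (forall g, (size (p g) <= d.+1)%N) -> (size (lin p K) <= d.+1)%N.
Proof.
move=> h; apply: leq_trans (size_sum _ _ _) _; elim/big_rec: _ => //= g m _ hm.
by rewrite geq_max hm andbT; apply: leq_trans (size_scale_leq _ _) (h g).
Qed.

Lemma adj_eval (C : fieldType) d N (p : {ffun 'I_d -> 'I_N} -> {poly C})
  (F : 'M[C]_(d, N)) (L R : 'M[C]_(N, d)) c s t :
  (forall g, pluecker F g = c * hom_eval d (p g) s t) ->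
  \adj (F *m L) *m (F *m R) =
  c *: map_mx (fun q => hom_eval d q s t) (\matrix_(i, j) lin p (repcol L (col j R) i)).
Proof.
move=> h; apply/matrixP => i j; rewrite cramer_entry !mxE.
have -> : col j (F *m R) = F *m col j R by rewrite !colE mulmxA.
by rewrite -mul_repcol (lin_eval _ h).
Qed.

Lemma core (C : numFieldType) d N (A B : 'M[C]_(d, N)) (L R : 'M[C]_(N, d))
  (hd : (0 < d)%N)
  (hAL : A *m L = 1%:M) (hAR : A *m R = 0) (hBL : B *m L = 0) (hBR : B *m R = 1%:M)
  (hLR : L *m A + R *m B = 1%:M)
  (f' : C -> C -> 'M[C]_(d, N)) (hmor : is_P1_morphism_of_degree f' d)
  (hU : exists2 M, M \in unitmx & f' 1 0 = M *m A)
  (hV : exists2 M, M \in unitmx & f' 1 1 = M *m (A + B))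
  (hW : exists2 M, M \in unitmx & f' 0 1 = M *m B) :
  forall s t : C, (s, t) != (0, 0) -> (f' s t == (s *: A + t *: B)%R)%MS.
Proof.
move: hmor => [p [hsz [_ hpl]]].
pose ev s t := fun q : {poly C} => hom_eval d q s t.
pose aP := lin p L; pose bP := lin p R.
pose nP : 'M[{poly C}]_d := \matrix_(i, j) lin p (repcol L (col j R) i).
pose mP : 'M[{poly C}]_d := \matrix_(i, j) lin p (repcol R (col j L) i).
have szl : forall K, (size (lin p K) <= d.+1)%N := fun K => lin_size K hsz.
have key : forall s t, (s, t) != (0, 0) -> exists2 c : C, c != 0 &
  [/\ \det (f' s t *m L) = c * ev s t aP, \det (f' s t *m R) = c * ev s t bP,
      \adj (f' s t *m L) *m (f' s t *m R) = c *: map_mx (ev s t) nP &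
      \adj (f' s t *m R) *m (f' s t *m L) = c *: map_mx (ev s t) mP].
  move=> s t st; have [c [cnz hc]] := hpl s t st; exists c => //; split.
  - exact: lin_eval.
  - exact: lin_eval.
  - exact: adj_eval.
  - exact: adj_eval.
have x1 : forall x : C, ((x, 1) : C * C) != (0, 0).
  by move=> x; rewrite xpair_eqE oner_eq0 andbF.
have evx : forall x K, ev x 1 (lin p K) = (lin p K).[x].
  by move=> x K; apply: hom_eval_x1.
have mapn : forall x, map_mx (ev x 1) nP = map_mx (horner_eval x) nP.
  by move=> x; apply/matrixP => i j; rewrite !mxE evx.
have mapm : forall x, map_mx (ev x 1) mP = map_mx (horner_eval x) mP.
  by move=> x; apply/matrixP => i j; rewrite !mxE evx.
have I1 : \det nP = aP ^+ d.-1 * bP.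
  apply: poly_eval_inj => x; have [c cnz [ha hb hn _]] := key x 1 (x1 x).
  have := congr1 determinant hn.
  rewrite det_mulmx det_adj ha hb detZ mapn det_map_mx /= horner_evalE !evx => e.
  apply: (mulfI (expf_neq0 d cnz)); rewrite -e hornerM horner_exp.
  have hc : c ^+ d = c ^+ d.-1 * c by rewrite -exprSr prednK.
  rewrite hc /aP /bP exprMn; move: (c ^+ d.-1) ((lin p L).[x] ^+ d.-1) => u v; ring.
have I2 : \det mP = bP ^+ d.-1 * aP.
  apply: poly_eval_inj => x; have [c cnz [ha hb _ hm]] := key x 1 (x1 x).
  have := congr1 determinant hm.
  rewrite det_mulmx det_adj ha hb detZ mapm det_map_mx /= horner_evalE !evx => e.
  apply: (mulfI (expf_neq0 d cnz)); rewrite -e hornerM horner_exp.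
  have hc : c ^+ d = c ^+ d.-1 * c by rewrite -exprSr prednK.
  rewrite hc /aP /bP exprMn; move: (c ^+ d.-1) ((lin p R).[x] ^+ d.-1) => u v; ring.
have adjprod : forall G1 G2 : 'M[C]_d,
    (\adj G1 *m G2) *m (\adj G2 *m G1) = (\det G1 * \det G2)%:M.
  move=> G1 G2; rewrite mulmxA -(mulmxA _ G2) mul_mx_adj mul_mx_scalar.
  by rewrite -scalemxAl mul_adj_mx scale_scalar_mx mulrC.
have I3 : nP *m mP = (aP * bP)%:M.
  apply/matrixP => i j; apply: poly_eval_inj => x.
  have [c cnz [ha hb hn hm]] := key x 1 (x1 x).
  have := congr1 (fun M : 'M[C]_d => M i j) (adjprod (f' x 1 *m L) (f' x 1 *m R)).
  rewrite hn hm ha hb -scalemxAl -scalemxAr mapn mapm -map_mxM !mxE !evx /=.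
  rewrite hornerMn hornerM => e.
  apply: (mulfI (mulf_neq0 cnz cnz)).
  rewrite -mulrA; move: e; rewrite horner_evalE => ->; rewrite mulrnAr.
  by congr (_ *+ _); ring.
have unit_det : forall M : 'M[C]_d, M \in unitmx -> \det M != 0.
  by move=> M; rewrite unitmxE unitfE.
have p10 : ((1, 0) : C * C) != (0, 0) by rewrite xpair_eqE oner_eq0.
have p01 : ((0, 1) : C * C) != (0, 0) by rewrite xpair_eqE oner_eq0 andbF.
have [ad nd] : aP`_d != 0 /\ forall i j, (nP i j)`_d = 0.
  have [M Mu eF] := hU; have [c cnz [ha _ hn _]] := key 1 0 p10.
  rewrite eF -!mulmxA hAL hAR mulmx1 mulmx0 in ha hn.
  split.
    by move: (unit_det M Mu); rewrite ha /ev hom_eval_10; apply: contraNneq => ->; rewrite mulr0.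
  move=> i j; have := congr1 (fun M : 'M[C]_d => M i j) hn.
  rewrite mulmx0 !mxE /ev hom_eval_10 => /esym/eqP; rewrite mulf_eq0 (negbTE cnz) /=.
  by move/eqP.
have [b0 m0] : bP`_0 != 0 /\ forall i j, (mP i j)`_0 = 0.
  have [M Mu eF] := hW; have [c cnz [_ hb _ hm]] := key 0 1 p01.
  rewrite eF -!mulmxA hBL hBR mulmx1 mulmx0 in hb hm.
  split.
    by move: (unit_det M Mu); rewrite hb /ev hom_eval_01; apply: contraNneq => ->; rewrite mulr0.
  move=> i j; have := congr1 (fun M : 'M[C]_d => M i j) hm.
  rewrite mulmx0 !mxE /ev hom_eval_01 => /esym/eqP; rewrite mulf_eq0 (negbTE cnz) /=.
  by move/eqP.
have V1 : forall i j, (nP i j).[1] = aP.[1] * (i == j)%:R.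
  have [M Mu eF] := hV; have [c cnz [ha _ hn _]] := key 1 1 (x1 1).
  rewrite eF -!mulmxA !mulmxDl hAL hAR hBL hBR addr0 add0r mulmx1 in ha hn.
  move=> i j; have := congr1 (fun M : 'M[C]_d => M i j) hn.
  rewrite mul_adj_mx ha !mxE !evx => e.
  apply: (mulfI cnz); rewrite -e -mulrnAr mulr_natr.
  done.
have sn : forall i j, (size (nP i j) <= d)%N.
  move=> i j; apply: size_top; last exact: nd.
  by rewrite mxE szl.
have [al [be [alnz benz eaP ebP enP]]] :=
  poly_chain hd (szl L) ad b0 sn m0 V1 I1 I2 I3.
move=> s t st; have [c cnz [ha hb hn hm]] := key s t st.
set G1 := f' s t *m L in ha hn hm; set G2 := f' s t *m R in hb hn hm.
have eF : f' s t = G1 *m A + G2 *m B by rewrite /G1 /G2 -!mulmxA -mulmxDr hLR mulmx1.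
rewrite /ev /aP eaP hom_evalXn // subnn expr0 mulr1 in ha.
rewrite /ev ebP hom_evalC in hb.
have [s0|snz] := eqVneq s 0.
  have tnz : t != 0 by move: st; rewrite xpair_eqE s0 eqxx.
  rewrite s0 in hm.
  have hG2 : \det G2 != 0 by rewrite hb !mulf_neq0 // expf_neq0.
  have mz : map_mx (ev 0 t) mP = 0.
    apply/matrixP => i j; rewrite [RHS]mxE [LHS]mxE /ev hom_eval_s0.
    by rewrite m0 mul0r.
  rewrite mz scaler0 in hm.
  have G10 : G1 = 0.
    have := congr1 (mulmx G2) hm; rewrite mulmxA mul_mx_adj mul_scalar_mx mulmx0.
    by move/eqP; rewrite scaler_eq0 (negbTE hG2) /= => /eqP.
  apply/eqmxMunitP; exists (t^-1 *: G2).
    by rewrite unitmxZ ?unitfE ?invr_eq0 // unitmxE unitfE.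
  rewrite eF G10 s0 mul0mx add0r scale0r add0r -scalemxAl -scalemxAr scalerA mulVf //.
  by rewrite scale1r.
have d1 : (d - d.-1 = 1)%N by lia.
have enm : map_mx (ev s t) nP = (al * s ^+ d.-1 * t)%:M.
  apply/matrixP => i j; rewrite [LHS]mxE enP /ev hom_evalXn ?leq_pred // d1 expr1 mxE.
  by case: (i == j); rewrite ?mulr1 ?mulr0 ?mul0r ?mulr1n ?mulr0n.
rewrite enm in hn.
have knz : c * (al * s ^+ d) != 0 by rewrite !mulf_neq0 // expf_neq0.
have hG1 : \det G1 != 0 by rewrite ha.
have eG2 : G2 = (t / s) *: G1.
  have := congr1 (mulmx G1) hn.
  rewrite mulmxA mul_mx_adj mul_scalar_mx -scalemxAr mul_mx_scalar ha scalerA => e.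
  apply: (scalerI knz); rewrite e scalerA; congr (_ *: _).
  have hs : s ^+ d = s ^+ d.-1 * s by rewrite -exprSr prednK.
  by rewrite hs; field.
apply/eqmxMunitP; exists (s^-1 *: G1).
  by rewrite unitmxZ ?unitfE ?invr_eq0 // unitmxE unitfE.
rewrite eF eG2 mulmxDr -!scalemxAr -!scalemxAl !scalerA.
by rewrite divff // scale1r.
Qed.

Lemma unit_coef (C : fieldType) d N (X Y : 'M[C]_d) (V P W : 'M[C]_(d, N)) :
  \rank V = d -> \rank (V :&: W)%MS = 0%N -> V = X *m P + Y *m W -> X \in unitmx.
Proof.
move=> rV rVW eV; rewrite -row_free_unit -kermx_eq0; apply/eqP.
set K := kermx X.
have hK : K *m V = (K *m Y) *m W by rewrite eV mulmxDr !mulmxA mulmx_ker mul0mx add0r.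
have h1 : (K *m V <= (V :&: W))%MS by rewrite sub_capmx submxMl hK submxMl.
have capz : (V :&: W)%MS = 0 by apply/eqP; rewrite -mxrank_eq0 rVW.
rewrite capz submx0 in h1.
have fV : row_free V by rewrite /row_free rV.
apply: (row_free_inj fV); rewrite mul0mx; exact/eqP.
Qed.

Lemma colsub_pencil (C : comNzRingType) d N (A B : 'M[C]_(d, N)) (g : 'I_d -> 'I_N) s t :
  colsub g (s *: A + t *: B) = s *: colsub g A + t *: colsub g B.
Proof. by apply/matrixP => i j; rewrite !mxE. Qed.

Unset Implicit Arguments.

Theorem mainTheorem1 (C : numClosedFieldType) (d : nat) (hd : (0 < d)%N)
  (U V W : 'M[C]_(d, 2 * d))
  (hU : \rank U = d) (hV : \rank V = d) (hW : \rank W = d)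
  (hUV : \rank (U :&: V)%MS = 0%N) (hUW : \rank (U :&: W)%MS = 0%N)
  (hVW : \rank (V :&: W)%MS = 0%N) :
  exists f : C -> C -> 'M[C]_(d, 2 * d),
    [/\ is_P1_morphism_of_degree f d,
        (f 1 0 == U)%MS, (f 1 1 == V)%MS, (f 0 1 == W)%MS &
        forall f' : C -> C -> 'M[C]_(d, 2 * d),
          is_P1_morphism_of_degree f' d ->
          (f' 1 0 == U)%MS -> (f' 1 1 == V)%MS -> (f' 0 1 == W)%MS ->
          forall s t : C, (s, t) != (0, 0) -> (f' s t == f s t)%MS].
Proof.
set T0 := col_mx U W.
have rT0 : \rank T0 = (d + d)%N.
  rewrite -addsmxE; have := mxrank_sum_cap U W; rewrite hUW hU hW addn0 => ->.
  done.
have fullT0 : row_full T0 by rewrite /row_full rT0 addnn mul2n.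
set Y := V *m pinvmx T0.
have eV : V = lsubmx Y *m U + rsubmx Y *m W.
  rewrite -mul_row_col hsubmxK /Y mulmxKpV //; exact: submx_full.
have X1u : lsubmx Y \in unitmx.
  exact: (unit_coef hV hVW eV).
have X2u : rsubmx Y \in unitmx.
  have eV' : V = rsubmx Y *m W + lsubmx Y *m U by rewrite addrC.
  have hVU : \rank (V :&: U)%MS = 0%N by rewrite capmxC.
  exact: (unit_coef hV hVU eV').
set A := lsubmx Y *m U; set B := rsubmx Y *m W.
have eVAB : V = A + B by [].
have AU : (A == U)%MS by apply/eqmxMunitP; exists (lsubmx Y).
have BW : (B == W)%MS by apply/eqmxMunitP; exists (rsubmx Y).
set T := col_mx A B.
have eT : T = block_mx (lsubmx Y) 0 0 (rsubmx Y) *m T0.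
  by rewrite mul_block_col !mul0mx addr0 add0r.
have Pu : block_mx (lsubmx Y) 0 0 (rsubmx Y) \in unitmx.
  by rewrite unitmxE det_ublock unitrM -!unitmxE X1u X2u.
have rT : \rank T = (d + d)%N.
  by rewrite eT (eqmxMfull _ (_ : row_full _)) ?rT0 // row_full_unit.
have fullT : row_full T by rewrite /row_full rT addnn mul2n.
have freeT : row_free T by rewrite /row_free rT.
set P := pinvmx T.
have TP : T *m P = 1%:M by apply: mulmxVp.
have PT : P *m T = 1%:M by apply: mulVpmx.
set L := lsubmx P; set R := rsubmx P.
have [hAL hAR hBL hBR] : [/\ A *m L = 1%:M, A *m R = 0, B *m L = 0 & B *m R = 1%:M].
  move: TP; rewrite -[P]hsubmxK mul_col_row scalar_mx_block.
  by move/eq_block_mx.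
have hLR : L *m A + R *m B = 1%:M.
  by rewrite -mul_row_col hsubmxK.
pose f := fun s t : C => s *: A + t *: B.
have hform : forall g : {ffun 'I_d -> 'I_(2 * d)}, exists q : {poly C},
    (size q <= d.+1)%N /\ forall s t, pluecker (f s t) g = hom_eval d q s t.
  move=> g; have [q [hq eq]] := isform_det (colsub g A) (colsub g B).
  by exists q; split=> // s t; rewrite /pluecker colsub_pencil eq.
have [p hp] := fin_all_exists hform.
have morf : is_P1_morphism_of_degree f d.
  exists p; split; first by move=> g; case: (hp g).
  split; last first.
    move=> s t _; exists 1; split; first exact: oner_neq0.
    by move=> g; rewrite mul1r (proj2 (hp g)).
  move=> s t st; have [g hg|h0] := pickP (fun g => hom_eval d (p g) s t != 0).
    by exists g.
  exfalso.
  have hz : forall K : 'M[C]_(2 * d, d), \det (f s t *m K) = 0.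
    move=> K; rewrite det_mul_CB big1 // => h _.
    by rewrite -/(pluecker _ h) (proj2 (hp h)); move: (h0 h) => /= /negbFE/eqP ->; rewrite mulr0.
  have [s0|snz] := eqVneq s 0.
    have tnz : t != 0 by move: st; rewrite xpair_eqE s0 eqxx.
    have := hz R; rewrite /f mulmxDl -!scalemxAl hAR hBR scaler0 add0r.
    by rewrite scalemx1 det_scalar => /eqP; rewrite expf_eq0 (negbTE tnz) andbF.
  have := hz L; rewrite /f mulmxDl -!scalemxAl hAL hBL scaler0 addr0.
  by rewrite scalemx1 det_scalar => /eqP; rewrite expf_eq0 (negbTE snz) andbF.
exists f; split => //.
- by rewrite /f scale1r scale0r addr0.
- by rewrite /f !scale1r eVAB submx_refl.
- by rewrite /f scale1r scale0r add0r.
move=> f' mor' h10 h11 h01 s t st.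
have toU : forall M : 'M[C]_(d, 2 * d), (M == U)%MS -> (M == A)%MS.
  by move=> M /eqmxP e1; apply/eqmxP; apply: eqmx_trans e1 (eqmx_sym (eqmxP AU)).
have toW : forall M : 'M[C]_(d, 2 * d), (M == W)%MS -> (M == B)%MS.
  by move=> M /eqmxP e1; apply/eqmxP; apply: eqmx_trans e1 (eqmx_sym (eqmxP BW)).
apply: (core hd hAL hAR hBL hBR hLR mor') => //.
- by apply/eqmxMunitP; apply: toU.
- by apply/eqmxMunitP; rewrite -eVAB.
- by apply/eqmxMunitP; apply: toW.
Qed.
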